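(* Let $t\le n-2$, and let $P^{\mathit{fip}}$ be any implementation of the knowledge-based program $\mathbf P^1$ with respect to $\gamma_{\mathit{fip},n,t}$. Consider a failure-free run (no message is lost and every agent is nonfaulty). (a) If at least one agent has initial preference $0$, then all agents decide by round $2$, with each of $P^{\min}$ (in $\gamma_{\min,n,t}$), $P^{\mathit{basic}}$ (in $\gamma_{\mathit{basic},n,t}$) and $P^{\mathit{fip}}$ (in $\gamma_{\mathit{fip},n,t}$). (b) If all agents have initial preference $1$, then all agents decide by round $t+2$ with $P^{\min}$, and by round $2$ with $P^{\mathit{basic}}$ and with $P^{\mathit{fip}}$.
   Context: Agents and runs. There are $n$ agents $\mathit{Agt}=\{1,\ldots,n\}$; time is $m\in\mathbb N$, and round $m+1$ is the step from time $m$ to time $m+1$; agent $i$ decides $v$ in round $k$ if it performs $\mathtt{decide}_i(v)$ at time $k-1$. A failure pattern is a pair $(\mathcal N,F)$ with $\mathcal N\subseteq\mathit{Agt}$ (nonfaulty agents) and $F:\mathbb N\times\mathit{Agt}\times\mathit{Agt}\to\{0,1\}$, $F(m,i,j)=0$ meaning the round-$(m+1)$ message from $i$ to $j$ is lost. $SO(t)$ is the set of failure patterns with $|\mathit{Agt}\setminus\mathcal N|\le t$ and $F(m,i,j)=0\Rightarrow i\notin\mathcal N$. An action protocol maps each agent's local states to actions $\{\mathtt{decide}_i(0),\mathtt{decide}_i(1),\mathtt{noop}\}$; with an initial global state it determines a run: at each time each agent performs its action, sends its messages (lost ones replaced by $\bot$), and updates its state. $\mathcal I,(r,m)\models K_i\varphi$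 iff $\varphi$ holds at all points $(r',m')$ with $r'_i(m')=r_i(m)$; $\bigcirc,\ominus$ are next/previous time. Minimal and basic contexts. $\gamma_{\min,n,t}$: failure model $SO(t)$; local states $\langle\mathit{time}_i,\mathit{init}_i,\mathit{decided}_i,\mathit{rd}_i\rangle$, initial states $\langle0,\mathit{init}_i,\bot,\bot\rangle$; an agent performing $\mathtt{decide}_i(v)$ sends $v$ to every agent, otherwise sends nothing; the transition increments $\mathit{time}_i$, sets $\mathit{decided}_i:=v$ on $\mathtt{decide}_i(v)$, and sets $\mathit{rd}_i$ to $0$ (resp. $1$) if in that round $i$ received $0$ (resp. $1$), else $\bot$. $\gamma_{\mathit{basic},n,t}$: as $\gamma_{\min,n,t}$ but with an extra component $\#1_i\in\{0,\ldots,n\}$ (initially $0$); an agent in state $\langle m,1,\bot,\bot,k\rangle$ performing $\mathtt{noop}$ sends $(\mathit{init},1)$ to every agent; $\#1_i$ is set to the number of $(\mathit{init},1)$ messages received in the round if $\mathit{decided}_i=\bot$ and $i$ receives no message $0$ or $1$ in that round, and to $0$ otherwise. $P^{\min}_i$: if $\mathit{decided}_i\ne\bot$ then $\mathtt{noop}$; else if $\mathit{init}_i=0$ or $\mathit{rd}_i=0$ then $\mathtt{decide}_i(0)$; else if $\mathit{time}_i=t+1$ then $\mathtt{decide}_i(1)$; else $\mathtt{noop}$. $P^{\mathit{basic}}_i$: if $\mathit{decided}_i\ne\bot$ then $\mathtt{noop}$; else if $\mathit{init}_i=0$ or $\mathit{rd}_i=0$ then $\mathtt{decide}_i(0)$;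 else if $\#1_i>n-\mathit{time}_i$ or $\mathit{rd}_i=1$ then $\mathtt{decide}_i(1)$; else $\mathtt{noop}$. Full-information context. $\gamma_{\mathit{fip},n,t}$ has failure model $SO(t)$; each agent's local state consists of its time, its initial preference $\mathit{init}_i$, and the complete record of all messages received; in every round every agent sends its entire local state to every agent regardless of its action. Given a protocol $P$, $\mathcal I_{\gamma_{\mathit{fip},n,t},P}$ is the system of its runs, with $\mathit{decided}_i=v$ true at $(r,m)$ iff $i$ decided $v$ in some round $\le m$ ($\bot$ if not yet), $\mathit{init}_i=v$ read from the state and $i\in\mathcal N$ iff $i\in\mathcal N(r)$. Abbreviations: $\exists v$ is $\bigvee_j\mathit{init}_j=v$; $\mathit{jdecided}_i=v$ is $\mathit{decided}_i=v\wedge\ominus(\mathit{decided}_i=\bot)$; $\mathit{deciding}_i=v$ is $\mathit{decided}_i=\bot\wedge\bigcirc(\mathit{decided}_i=v)$. A knowledge-based program has each $\mathbf P_i$ a nested if-then-else over actions with tests built from formulas $K_i\psi$ and local propositions; $P$ implements it if, in $\mathcal I_{\gamma_{\mathit{fip},n,t},P}$, $P_i(s)$ equals the action obtained by evaluating the tests at $s$, for every arising local state $s$. $E_{\mathcal N}\varphi$ holds at $(r,m)$ iff $K_j\varphi$ holds for all $j\in\mathcal N(r)$; $C_{\mathcal N}\varphi$ iff $E_{\mathcal N}^k\varphi$ for all $k\ge1$; $C_{\mathcal N}(\mathit{t\text{-}faulty}\wedge\varphi)$ abbreviates $\bigvee_{|A|=t}C_{\mathcal N}(\bigwedge_{i\in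 A}\neg(i\in\mathcal N)\wedge\varphi)$; $\mathit{no\text{-}decided}_{\mathcal N}(x)$ abbreviates $\bigwedge_{j\in\mathcal N}\neg(\mathit{decided}_j=x)$. $\mathbf P^1_i$: if $\mathit{decided}_i\ne\bot$ then $\mathtt{noop}$; else if $K_i(C_{\mathcal N}(\mathit{t\text{-}faulty}\wedge\mathit{no\text{-}decided}_{\mathcal N}(1)\wedge\exists0))$ then $\mathtt{decide}_i(0)$; else if $K_i(C_{\mathcal N}(\mathit{t\text{-}faulty}\wedge\mathit{no\text{-}decided}_{\mathcal N}(0)\wedge\exists1))$ then $\mathtt{decide}_i(1)$; else if $\mathit{init}_i=0\vee K_i(\bigvee_{j}\mathit{jdecided}_j=0)$ then $\mathtt{decide}_i(0)$; else if $K_i(\bigwedge_{j}\neg(\mathit{deciding}_j=0))$ then $\mathtt{decide}_i(1)$; else $\mathtt{noop}$. *)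

(* Defs.v *)
From mathcomp Require Import all_boot.
Set Implicit Arguments. Unset Strict Implicit. Unset Printing Implicit Defensive.

(* Values {0,1} are encoded as bool: 0 = false, 1 = true.
   Actions: decide_i(v) = Some v, noop = None.
   Agents Agt = {1..n} are encoded as 'I_n. *)
Definition action := option bool.
Definition decide (v : bool) : action := Some v.
Definition noop : action := None.

(* F m i j = false  means the round-(m+1) message from i to j is lost.  *)
Definition SO (n t : nat) (N : {set 'I_n}) (F : nat -> 'I_n -> 'I_n -> bool) : Prop :=
  #|~: N| <= t /\ (forall m i j, F m i j = false -> i \notin N).

Definition F_none (n : nat) : nat -> 'I_n -> 'I_n -> bool := fun _ _ _ => true.

Record mstate := MState { m_time : nat; m_init : bool;
                          m_decided : option bool; m_rd : option bool }.

Definition P_min (t : nat) (s : mstate) : action :=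
  if m_decided s != None then noop
  else if (m_init s == false) || (m_rd s == Some false) then decide false
  else if m_time s == t.+1 then decide true
  else noop.

Definition rd_update (n : nat) (a : 'I_n -> action) (Fm : 'I_n -> 'I_n -> bool)
  (j : 'I_n) : option bool :=
  if [exists i, (a i == Some false) && Fm i j] then Some false
  else if [exists i, (a i == Some true) && Fm i j] then Some true
  else None.

Definition upd_decided (a : action) (d : option bool) : option bool :=
  match a with Some v => Some v | None => d end.

Fixpoint min_run (n t : nat) (init : 'I_n -> bool)
    (F : nat -> 'I_n -> 'I_n -> bool) (m : nat) : 'I_n -> mstate :=
  match m with
  | 0 => fun i => MState 0 (init i) None None
  | m'.+1 =>
      let s := min_run t init F m' in
      let a := fun i => P_min t (s i) in
      fun j => MState (m_time (s j)).+1 (m_init (s j))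
                      (upd_decided (a j) (m_decided (s j)))
                      (rd_update a (F m') j)
  end.

(* agent i decides by round k: it performs some decide action at a time
   m <= k-1 (round m+1 <= k) *)
Definition min_decides_by (n t : nat) (init : 'I_n -> bool)
    (F : nat -> 'I_n -> 'I_n -> bool) (i : 'I_n) (k : nat) : Prop :=
  exists m, m < k /\ P_min t (min_run t init F m i) != noop.

Record bstate := BState { b_time : nat; b_init : bool;
                          b_decided : option bool; b_rd : option bool;
                          b_cnt1 : nat }.

Definition P_basic (n : nat) (s : bstate) : action :=
  if b_decided s != None then noop
  else if (b_init s == false) || (b_rd s == Some false) then decide false
  else if (n < b_time s + b_cnt1 s) || (b_rd s == Some true) then decide true
  else noop.

(* agent in state <m,1,bot,bot,k> performing noop sends (init,1) *)
Definition sends_init1 (s : bstate) (a : action) : bool :=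
  [&& b_init s, b_decided s == None, b_rd s == None & a == None].

Fixpoint basic_run (n : nat) (init : 'I_n -> bool)
    (F : nat -> 'I_n -> 'I_n -> bool) (m : nat) : 'I_n -> bstate :=
  match m with
  | 0 => fun i => BState 0 (init i) None None 0
  | m'.+1 =>
      let s := basic_run init F m' in
      let a := fun i => P_basic n (s i) in
      fun j =>
        let d' := upd_decided (a j) (b_decided (s j)) in
        let got01 := [exists i, (a i != None) && F m' i j] in
        BState (b_time (s j)).+1 (b_init (s j)) d' (rd_update a (F m') j)
          (if (d' == None) && ~~ got01
           then #|[set i | sends_init1 (s i) (a i) && F m' i j]|
           else 0)
  end.

Definition basic_decides_by (n : nat) (init : 'I_n -> bool)
    (F : nat -> 'I_n -> 'I_n -> bool) (i : 'I_n) (k : nat) : Prop :=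
  exists m, m < k /\ P_basic n (basic_run init F m i) != noop.

(* A local state: the initial preference, then for each round the list
   (indexed by sender, in the order of enum 'I_n) of received messages,
   None = lost message (bot).   *)
Inductive fview :=
  | FV0 of bool
  | FVS of fview & seq (option fview).

Fixpoint ftime (s : fview) : nat :=
  match s with FV0 _ => 0 | FVS p _ => (ftime p).+1 end.

Record frun (n : nat) := FRun { r_init : 'I_n -> bool;
                                r_N : {set 'I_n};
                                r_F : nat -> 'I_n -> 'I_n -> bool }.

Definition in_sys (n t : nat) (r : frun n) : Prop := SO t (r_N r) (r_F r).

(* local state of agent i at time m in run r (every agent sends its whole
   local state to every agent every round) *)
Fixpoint fstate (n : nat) (r : frun n) (m : nat) : 'I_n -> fview :=
  match m with
  | 0 => fun i => FV0 (r_init r i)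
  | m'.+1 => fun i =>
      FVS (fstate r m' i)
          [seq (if r_F r m' j i then Some (fstate r m' j) else None) | j <- enum 'I_n]
  end.

Definition fformula (n : nat) := frun n -> nat -> Prop.

Section FipLogic.
Variables (n t : nat) (P : 'I_n -> fview -> action).

Definition Kn (i : 'I_n) (phi : fformula n) : fformula n := fun r m =>
  forall r' m', in_sys t r' -> fstate r' m' i = fstate r m i -> phi r' m'.

(* decided_i = v : i decided v in some round <= m *)
Definition decided_is (i : 'I_n) (v : bool) : fformula n := fun r m =>
  exists k, k < m /\ P i (fstate r k i) = Some v.
Definition decided_bot (i : 'I_n) : fformula n := fun r m =>
  forall k, k < m -> P i (fstate r k i) = None.

Definition init_is (j : 'I_n) (v : bool) : fformula n := fun r _ => r_init r j = v.
Definition exists_val (v : bool) : fformula n := fun r m => exists j, init_is j v r m.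
Definition prevf (phi : fformula n) : fformula n := fun r m => 0 < m /\ phi r m.-1.
Definition nextf (phi : fformula n) : fformula n := fun r m => phi r m.+1.

Definition jdecided (j : 'I_n) (v : bool) : fformula n := fun r m =>
  decided_is j v r m /\ prevf (decided_bot j) r m.
Definition deciding (j : 'I_n) (v : bool) : fformula n := fun r m =>
  decided_bot j r m /\ nextf (decided_is j v) r m.

Definition En (phi : fformula n) : fformula n := fun r m =>
  forall j, j \in r_N r -> Kn j phi r m.
Fixpoint Eiter (k : nat) (phi : fformula n) : fformula n :=
  match k with 0 => phi | k'.+1 => En (Eiter k' phi) end.
Definition Cn (phi : fformula n) : fformula n := fun r m =>
  forall k, 0 < k -> Eiter k phi r m.

(* C_N(t-faulty /\ phi) *)
Definition C_tfaulty (phi : fformula n) : fformula n := fun r m =>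
  exists A : {set 'I_n}, #|A| = t /\
    Cn (fun r' m' => (forall i, i \in A -> i \notin r_N r') /\ phi r' m') r m.

Definition no_decided (x : bool) : fformula n := fun r m =>
  forall j, j \in r_N r -> ~ decided_is j x r m.

Definition andf (phi psi : fformula n) : fformula n := fun r m => phi r m /\ psi r m.

Definition test1 (i : 'I_n) : fformula n :=
  Kn i (C_tfaulty (andf (no_decided true) (exists_val false))).
Definition test2 (i : 'I_n) : fformula n :=
  Kn i (C_tfaulty (andf (no_decided false) (exists_val true))).
Definition test3 (i : 'I_n) : fformula n := fun r m =>
  init_is i false r m \/ Kn i (fun r' m' => exists j, jdecided j false r' m') r m.
Definition test4 (i : 'I_n) : fformula n :=
  Kn i (fun r' m' => forall j, ~ deciding j false r' m').

(* P implements P^1 w.r.t. gamma_{fip,n,t}: at every point of the system,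
   P's action equals the action selected by the nested if-then-else. *)
Definition implements_P1 : Prop :=
  forall (i : 'I_n) (r : frun n) (m : nat), in_sys t r ->
    let a := P i (fstate r m i) in
    let T1 := test1 i r m in let T2 := test2 i r m in
    let T3 := test3 i r m in let T4 := test4 i r m in
    let nd := decided_bot i r m in
    (~ nd -> a = noop) /\
    (nd -> T1 -> a = decide false) /\
    (nd -> ~ T1 -> T2 -> a = decide true) /\
    (nd -> ~ T1 -> ~ T2 -> T3 -> a = decide false) /\
    (nd -> ~ T1 -> ~ T2 -> ~ T3 -> T4 -> a = decide true) /\
    (nd -> ~ T1 -> ~ T2 -> ~ T3 -> ~ T4 -> a = noop).

End FipLogic.

Definition fip_decides_by (n : nat) (P : 'I_n -> fview -> action) (r : frun n)
    (i : 'I_n) (k : nat) : Prop :=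
  exists m, m < k /\ P i (fstate r m i) <> noop.

(* Main.v *)
Require Import Defs.
From mathcomp Require Import all_boot.
From Stdlib Require Import Classical FunctionalExtensionality.
Set Implicit Arguments. Unset Strict Implicit.

Lemma ftime_fstate n (r : frun n) m i : ftime (fstate r m i) = m.
Proof. by elim: m i => //= m IH i; rewrite IH. Qed.

Lemma in_sys0 n t (init : 'I_n -> bool) : in_sys t (FRun init setT (@F_none n)).
Proof. by split => //=; rewrite setCT cards0. Qed.

Lemma Nne n t (r : frun n) : in_sys t r -> t < n -> exists j, j \in r_N r.
Proof.
move=> [Hc _] Htn; apply/set0Pn/eqP => N0.
move: Hc; rewrite N0 setC0 cardsT card_ord => H.
by move: (leq_trans Htn H); rewrite ltnn.
Qed.

Lemma Ctf_elim n t (r : frun n) m phi :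
  in_sys t r -> t < n -> C_tfaulty t phi r m -> phi r m.
Proof.
move=> Hr Htn [A [_ HC]].
have [j Hj] := Nne Hr Htn.
have := HC 1 isT; rewrite /= /En => /(_ j Hj). move /(_ r m Hr erefl).
by case.
Qed.

Lemma view1 n (r' : frun n) (init : 'I_n -> bool) m' i :
  fstate r' m' i = fstate (FRun init setT (@F_none n)) 1 i ->
  m' = 1 /\ forall j, r_init r' j = init j.
Proof.
move=> E.
have Hm : m' = 1 by rewrite -(ftime_fstate r' m' i) E ftime_fstate.
split => //; subst m'.
move: E => /= [_] /eq_in_map H j.
have := H j; rewrite mem_enum => /(_ isT).
by case: (r_F r' 0 j i) => //= -[->].
Qed.

Lemma act_nonnoop n t P (Himpl : implements_P1 t P) (r : frun n) m i :
  in_sys t r -> decided_bot P i r m -> (test3 t P i r m \/ test4 t P i r m) ->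
  P i (fstate r m i) <> noop.
Proof.
move=> Hr Hnd H34.
move: (Himpl i r m Hr) => /= [_ [H1 [H2 [H3 [H4 _]]]]].
case: (classic (test1 t P i r m)) => T1; first by rewrite H1.
case: (classic (test2 t P i r m)) => T2; first by rewrite H2.
case: (classic (test3 t P i r m)) => T3; first by rewrite H3.
case: H34 => // T4; by rewrite H4.
Qed.

Lemma fip_a n t P (Himpl : implements_P1 t P) (Htn : t < n) (init : 'I_n -> bool) i0 :
  init i0 = false -> forall i, fip_decides_by P (FRun init setT (@F_none n)) i 2.
Proof.
move=> Hi0.
set r0 := FRun init setT (@F_none n).
have Hs := in_sys0 t init.
have S1 : P i0 (FV0 false) = Some false.
  move: (Himpl i0 r0 0 Hs) => /= [_ [H1 [H2 [H3 _]]]].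
  have nd : decided_bot P i0 r0 0 by move=> k.
  have -> : FV0 false = fstate r0 0 i0 by rewrite /= Hi0.
  case: (classic (test1 t P i0 r0 0)) => T1; first by rewrite (H1 nd T1).
  have T2 : ~ test2 t P i0 r0 0.
    move=> T2.
    have := T2 (FRun (fun _ => false) setT (@F_none n)) 0 (in_sys0 t (fun _ : 'I_n => false)).
    rewrite /= Hi0 => /(_ erefl) /(Ctf_elim (in_sys0 t (fun _ : 'I_n => false)) Htn) [_ [j]].
    by rewrite /init_is.
  by rewrite (H3 nd T1 T2); [| left].
move=> i.
case E : (P i (fstate r0 0 i)) => [a|].
  by exists 0; split => //; rewrite E.
exists 1; split => //.
apply: (act_nonnoop Himpl Hs).
  by move=> [|k] // _; exact: E.
left; right => r' m' Hr' /view1 [-> Hin].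
exists i0; split; last by split.
by exists 0; split => //=; rewrite Hin Hi0.
Qed.

Lemma fip_b n t P (Himpl : implements_P1 t P) (Htn : t < n) (init : 'I_n -> bool) :
  (forall i, init i = true) -> forall i, fip_decides_by P (FRun init setT (@F_none n)) i 2.
Proof.
move=> Hall.
set r0 := FRun init setT (@F_none n).
have Hs := in_sys0 t init.
have S1 : forall j, P j (FV0 true) <> Some false.
  move=> j.
  move: (Himpl j r0 0 Hs) => /= [_ [H1 [H2 [H3 [H4 H5]]]]].
  have nd : decided_bot P j r0 0 by move=> k.
  have -> : FV0 true = fstate r0 0 j by rewrite /= Hall.
  have T1 : ~ test1 t P j r0 0.
    move=> /(_ r0 0 Hs erefl) /(Ctf_elim Hs Htn) [_ [j']].
    by rewrite /init_is /= Hall.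
  have T3 : ~ test3 t P j r0 0.
    case; first by rewrite /init_is /= Hall.
    by move=> /(_ r0 0 Hs erefl) [j' [_ []]].
  case: (classic (test2 t P j r0 0)) => T2; first by rewrite (H2 nd T1 T2).
  case: (classic (test4 t P j r0 0)) => T4; first by rewrite (H4 nd T1 T2 T3 T4).
  by rewrite (H5 nd T1 T2 T3 T4).
move=> i.
case E : (P i (fstate r0 0 i)) => [a|].
  by exists 0; split => //; rewrite E.
exists 1; split => //.
apply: (act_nonnoop Himpl Hs).
  by move=> [|k] // _; exact: E.
right => r' m' Hr' /view1 [-> Hin] j [Hbot [k [Hk HP]]].
have Hj0 : P j (fstate r' 0 j) = None by apply: Hbot.
case: k Hk HP => [|[|k]] // _ HP; first by rewrite Hj0 in HP.
move: (Himpl j r' 1 Hr') => /= [_ [H1 [H2 [H3 [H4 H5]]]]].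
have T1 : ~ test1 t P j r' 1.
  move=> /(_ r' 1 Hr' erefl) /(Ctf_elim Hr' Htn) [_ [j']].
  by rewrite /init_is Hin Hall.
have T3 : ~ test3 t P j r' 1.
  case; first by rewrite /init_is Hin Hall.
  move=> /(_ r' 1 Hr' erefl) [j' [[[|k'] [Hk' HP']] _]] //.
  by move: HP'; rewrite /= Hin Hall; apply: S1.
case: (classic (test2 t P j r' 1)) => T2; first by rewrite (H2 Hbot T1 T2) in HP.
case: (classic (test4 t P j r' 1)) => T4; first by rewrite (H4 Hbot T1 T2 T3 T4) in HP.
by rewrite (H5 Hbot T1 T2 T3 T4) in HP.
Qed.

Lemma min_a n t (init : 'I_n -> bool) i0 : init i0 = false ->
  forall i, min_decides_by t init (@F_none n) i 2.
Proof.
move=> Hi0 i.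
case Hi : (init i).
  exists 1; split => //.
  have Hrd : rd_update (fun i => P_min t (min_run t init (@F_none n) 0 i)) (F_none 0) i = Some false.
    rewrite /rd_update ifT //; apply/existsP; exists i0.
    by rewrite /= /P_min /= Hi0.
  by rewrite /= Hrd /P_min /= Hi.
by exists 0; split => //; rewrite /P_min /= Hi.
Qed.

Lemma min_run_all1 n t (init : 'I_n -> bool) : (forall i, init i = true) ->
  forall m, m <= t.+1 -> forall i, min_run t init (@F_none n) m i = MState m true None None.
Proof.
move=> Hall; elim => [|m IH] Hm i /=; first by rewrite Hall.
rewrite !IH ?(ltnW Hm) //.
have Hp : forall j, P_min t (min_run t init (@F_none n) m j) = None.
  move=> j; rewrite IH ?(ltnW Hm) // /P_min /=.
  by rewrite (ltn_eqF Hm).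
rewrite /P_min /= (ltn_eqF Hm) /= /rd_update.
rewrite ifF; last by apply/existsP => -[j]; rewrite IH ?(ltnW Hm) //= (ltn_eqF Hm).
by rewrite ifF //; apply/existsP => -[j]; rewrite IH ?(ltnW Hm) //= (ltn_eqF Hm).
Qed.

Lemma min_b n t (init : 'I_n -> bool) : (forall i, init i = true) ->
  forall i, min_decides_by t init (@F_none n) i (t + 2).
Proof.
move=> Hall i; exists t.+1; split; first by rewrite addn2.
by rewrite min_run_all1 // /P_min /= eqxx.
Qed.

Lemma basic_a n (init : 'I_n -> bool) i0 : init i0 = false ->
  forall i, basic_decides_by init (@F_none n) i 2.
Proof.
move=> Hi0 i.
case Hi : (init i).
  exists 1; split => //.
  have Hrd : rd_update (fun i => P_basic n (basic_run init (@F_none n) 0 i)) (F_none 0) i = Some false.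
    rewrite /rd_update ifT //; apply/existsP; exists i0.
    by rewrite /= /P_basic /= Hi0.
  by rewrite /= Hrd /P_basic /= Hi.
by exists 0; split => //; rewrite /P_basic /= Hi.
Qed.

Lemma basic_b n (init : 'I_n -> bool) : (forall i, init i = true) ->
  forall i, basic_decides_by init (@F_none n) i 2.
Proof.
move=> Hall i; exists 1; split => //.
have Hp : forall j, P_basic n (basic_run init (@F_none n) 0 j) = None.
  by move=> j; rewrite /P_basic /= Hall.
rewrite /= !Hp /=.
have Ef : (fun i0 : 'I_n => if (init i0 == false) || (None == Some false)
             then decide false else noop) = fun _ => noop.
  by apply: functional_extensionality => j; rewrite Hall.
rewrite /P_basic /= Ef /= Hall /=.
have Hr : rd_update (fun _ : 'I_n => noop) (F_none 0) i = None.
  by rewrite /rd_update !ifF //; apply/existsP => -[].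
rewrite Hr /=.
have Hx : [exists i0, (noop != None) && F_none 0 i0 i] = false by apply/existsP => -[].
have Hx' : [exists i0, ((if (init i0 == false) || (None == Some false) then decide false else noop) != None) && F_none 0 i0 i] = false.
  by apply/existsP => -[j]; rewrite Hall.
rewrite Hx' /=.
have -> : #|[set i0 | sends_init1 {| b_time := 0; b_init := init i0; b_decided := None; b_rd := None; b_cnt1 := 0 |} (if (init i0 == false) || (None == Some false) then decide false else noop) & F_none 0 i0 i]| = n.
  rewrite -[RHS]card_ord -cardsT; apply: eq_card => j.
  by rewrite !inE /sends_init1 /= Hall.
by rewrite add1n ltnSn.
Qed.

Theorem mainTheorem14 (n t : nat) (Ht : t + 2 <= n)
  (Pfip : 'I_n -> fview -> action) (Himpl : implements_P1 t Pfip)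
  (init : 'I_n -> bool) :
  ((exists i, init i = false) ->
     (forall i, min_decides_by t init (@F_none n) i 2) /\
     (forall i, basic_decides_by init (@F_none n) i 2) /\
     (forall i, fip_decides_by Pfip (FRun init setT (@F_none n)) i 2)) /\
  ((forall i, init i = true) ->
     (forall i, min_decides_by t init (@F_none n) i (t + 2)) /\
     (forall i, basic_decides_by init (@F_none n) i 2) /\
     (forall i, fip_decides_by Pfip (FRun init setT (@F_none n)) i 2)).
Proof.
have Htn : t < n by apply: leq_trans Ht; rewrite addn2 ltnS leqnSn.
split.
  move=> [i0 Hi0]; split; first exact: min_a Hi0.
  split; first exact: basic_a Hi0.
  exact: (@fip_a n t Pfip Himpl Htn init i0 Hi0).
move=> Hall; split; first exact: min_b Hall.
split; first exact: basic_b Hall.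
exact: (@fip_b n t Pfip Himpl Htn init Hall).
Qed.
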